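(* Let $\mathcal G_i=G_i^S\cup G_i^I$ and $\mathcal G_j=G_j^S\cup G_j^I$ be two networks with vertex-disjoint state graphs $G_i^S=(V_i^S,E_i^S)$, $G_j^S=(V_j^S,E_j^S)$ and disjoint sets of input nodes, and suppose both $\mathcal G_i$ and $\mathcal G_j$ are strongly structurally controllable (SSC). Let the bridge graph between them consist of exactly one edge $\{k,l\}$ with $k\in V_i^S$, $l\in V_j^S$ (arbitrary). Then the merged network, whose state graph has vertex set $V_i^S\cup V_j^S$ and edge set $E_i^S\cup E_j^S\cup\{\{k,l\}\}$ and whose input nodes are those of $\mathcal G_i$ together with those of $\mathcal G_j$ (attached as before), is SSC, regardless of the choice of $k$ and $l$.
   Context: Network model: a network $\mathcal G=G^S\cup G^I$ consists of an undirected simple state graph $G^S$ on state nodes $\{1,\dots,n\}$ and a set of $m$ external input nodes $u_1,\dots,u_m$, where each input node $u_r$ has exactly one directed edge, to a state node $v_r$, and the $v_r$ are pairwise distinct; the input matrix is $B=[e_{v_1},\dots,e_{v_m}]\in\mathbb R^{n\times m}$ (standard basis vectors). The dynamics are $\dot x=Mx+Bu$, where $M$ ranges over the family $Q(G^S)$ of symmetric matrices with $M_{ij}=a_{ij}>0$ if $\{i,j\}$ is an edge of $G^S$, $M_{ij}=0$ if $i\ne j$ are non-adjacent, and $M_{ii}=-\sum_{j\in\mathcal N_i}a_{ij}+a_{ii}$ with an arbitrary self-loop weight $a_{ii}<0$ ($\mathcal N_i$ the neighbours of $i$ in $G^S$). The network is strongly structurally controllable (SSC) if for every $M\in Q(G^S)$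 the controllability matrix $[B,MB,\dots,M^{n-1}B]$ has rank $n$. A bridge graph between two vertex-disjoint state graphs is a set of edges each joining a node of one to a node of the other, such that every node is incident to at most one bridge edge. *)

(* Defs.v *)
From HB Require Import structures.
From mathcomp Require Import all_boot all_order all_algebra.
From mathcomp Require Import reals.
Set Implicit Arguments. Unset Strict Implicit. Unset Printing Implicit Defensive.
Import Order.TTheory GRing.Theory Num.Theory.
Local Open Scope ring_scope.

Definition simple_graph (n : nat) (e : rel 'I_n) : Prop :=
  symmetric e /\ irreflexive e.

(* Input matrix B = [e_{v_1}, ..., e_{v_m}] for input nodes u_r -> v r. *)
Definition inputB (R : realType) (n m : nat) (v : 'I_m -> 'I_n) : 'M[R]_(n, m) :=
  \matrix_(i, r) ((i == v r)%:R).

Definition inQ (R : realType) (n : nat) (e : rel 'I_n) (M : 'M[R]_n) : Prop :=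
  [/\ M^T = M,
      (forall i j, i != j -> e i j -> 0 < M i j),
      (forall i j, i != j -> ~~ e i j -> M i j = 0) &
      (forall i, exists a : R, a < 0 /\ M i i = - (\sum_(j | e i j) M i j) + a)].

Definition ctrb (R : realType) (n m : nat) (M : 'M[R]_n) (B : 'M[R]_(n, m))
  : 'M[R]_(n, \sum_(k < n) m) :=
  @mxrow R n (fun _ : 'I_n => m) n (fun k => M ^+ k *m B).

Definition SSC (R : realType) (n m : nat) (e : rel 'I_n) (v : 'I_m -> 'I_n) : Prop :=
  forall M : 'M[R]_n, inQ e M -> \rank (ctrb M (inputB R v)) = n.

Definition merge_rel (n1 n2 : nat) (e1 : rel 'I_n1) (e2 : rel 'I_n2)
  (k : 'I_n1) (l : 'I_n2) : rel 'I_(n1 + n2) :=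
  fun x y =>
    match split x, split y with
    | inl a, inl b => e1 a b
    | inr a, inr b => e2 a b
    | inl a, inr b => (a == k) && (b == l)
    | inr b, inl a => (a == k) && (b == l)
    end.

Definition merge_inputs (n1 n2 m1 m2 : nat) (v1 : 'I_m1 -> 'I_n1)
  (v2 : 'I_m2 -> 'I_n2) : 'I_(m1 + m2) -> 'I_(n1 + n2) :=
  fun r => match split r with
           | inl a => lshift n2 (v1 a)
           | inr b => rshift n1 (v2 b)
           end.

(* Main.v *)
Require Import Defs.
From HB Require Import structures.
From mathcomp Require Import all_boot all_order all_algebra.
From mathcomp Require Import reals.
From mathcomp Require Import complex.
From mathcomp Require Import ring lra.
Set Implicit Arguments. Unset Strict Implicit. Unset Printing Implicit Defensive.
Import Order.TTheory GRing.Theory Num.Theory.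
Local Open Scope ring_scope.
Lemma stable_eigvec (C : numClosedFieldType) n (A V : 'M[C]_n) :
  stablemx V A -> V != 0 ->
  exists2 z : 'rV[C]_n, z != 0 & (z <= V)%MS /\ exists mu, z *m A = mu *: z.
Proof.
move=> sVA Vnz.
have r_gt0 : (0 < \rank V)%N by rewrite lt0n mxrank_eq0.
have [a ha] := eigenvalue_closed (restrictmx V A) r_gt0.
have [v hv vnz] := eigenvalueP ha.
exists (v *m row_base V).
  by rewrite mulmx_free_eq0 ?row_base_free.
split.
  by rewrite (submx_trans (submxMl _ _)) // eq_row_base.
have : stablemx v (restrictmx V A) by rewrite hv scalemx_sub.
by rewrite stablemx_restrict // => /sub_rVP [mu ->]; exists mu.
Qed.
Section Realify.
Variable R : rcfType.
Local Notation CC := (R[i]).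
Local Notation Re := (@complex.Re R).
Local Notation Im := (@complex.Im R).
Local Notation rc r := ((r : R)%:C)%C.

Lemma Re_mulr (x : CC) (r : R) : Re (x * rc r) = Re x * r.
Proof. by case: x => xr xi /=; rewrite mulr0 subr0. Qed.
Lemma Im_mulr (x : CC) (r : R) : Im (x * rc r) = Im x * r.
Proof. by case: x => xr xi /=; rewrite mulr0 add0r. Qed.
Lemma Re_mull (x y : CC) : Re (x * y) = Re x * Re y - Im x * Im y.
Proof. by case: x => ? ?; case: y => ? ? /=. Qed.
Lemma Im_mull (x y : CC) : Im (x * y) = Re x * Im y + Im x * Re y.
Proof. by case: x => ? ?; case: y => ? ? /=. Qed.
Local Notation rcf := (real_complex R).
Lemma ReD (x y : CC) : Re (x + y) = Re x + Re y.
Proof. by case: x => ? ?; case: y => ? ?. Qed.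
Lemma ImD (x y : CC) : Im (x + y) = Im x + Im y.
Proof. by case: x => ? ?; case: y => ? ?. Qed.
Lemma Re0 : Re 0 = 0. Proof. by []. Qed.
Lemma Im0 : Im 0 = 0. Proof. by []. Qed.

Lemma map_Re_mul m n p (z : 'M[CC]_(m, n)) (X : 'M[R]_(n,p)) :
  map_mx Re (z *m map_mx rcf X) = map_mx Re z *m X.
Proof.
apply/matrixP => i j; rewrite !mxE (big_morph _ ReD Re0).
by apply: eq_bigr => k _; rewrite !mxE Re_mulr.
Qed.
Lemma map_Im_mul m n p (z : 'M[CC]_(m, n)) (X : 'M[R]_(n,p)) :
  map_mx Im (z *m map_mx rcf X) = map_mx Im z *m X.
Proof.
apply/matrixP => i j; rewrite !mxE (big_morph _ ImD Im0).
by apply: eq_bigr => k _; rewrite !mxE Im_mulr.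
Qed.
Lemma map_Re_scale m n (mu : CC) (z : 'M[CC]_(m, n)) :
  map_mx Re (mu *: z) = Re mu *: map_mx Re z - Im mu *: map_mx Im z.
Proof. by apply/matrixP => i j; rewrite !mxE Re_mull. Qed.
Lemma map_Im_scale m n (mu : CC) (z : 'M[CC]_(m, n)) :
  map_mx Im (mu *: z) = Im mu *: map_mx Re z + Re mu *: map_mx Im z.
Proof. by apply/matrixP => i j; rewrite !mxE Im_mull addrC. Qed.
Lemma tr1 (A : 'M[R]_1) : A^T = A.
Proof. by apply/matrixP => i j; rewrite !ord1 mxE. Qed.

Lemma sqnorm_ge0 n (v : 'rV[R]_n) : 0 <= (v *m v^T) 0 0.
Proof. by rewrite mxE; apply: sumr_ge0 => j _; rewrite mxE -expr2 sqr_ge0. Qed.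

Lemma sqnorm_gt0 n (v : 'rV[R]_n) : v != 0 -> 0 < (v *m v^T) 0 0.
Proof.
move=> vnz; rewrite lt_def sqnorm_ge0 andbT; apply: contra vnz => /eqP h.
rewrite mxE in h.
have h0 : forall j : 'I_n, true -> 0 <= v 0 j * v^T j 0.
  by move=> j _; rewrite mxE -expr2 sqr_ge0.
have h2 := psumr_eq0P h0 h.
apply/eqP/matrixP => i j; rewrite !ord1 mxE.
have := h2 j isT; rewrite mxE -expr2 => /eqP; rewrite sqrf_eq0 => /eqP //.
Qed.

Lemma realify n p (M : 'M[R]_n) (K : 'M[R]_(n,p)) (z : 'rV[CC]_n) (mu : CC) :
  M^T = M -> z != 0 -> z *m map_mx rcf M = mu *: z -> z *m map_mx rcf K = 0 ->
  exists2 w : 'rV[R]_n, w != 0 & exists lam, w *m M = lam *: w /\ w *m K = 0.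
Proof.
move=> sM znz hz hK.
set a := map_mx Re z; set b := map_mx Im z.
have eA : a *m M = Re mu *: a - Im mu *: b by rewrite -map_Re_mul hz map_Re_scale.
have eB : b *m M = Im mu *: a + Re mu *: b by rewrite -map_Im_mul hz map_Im_scale.
have kA : a *m K = 0 by rewrite -map_Re_mul hK; apply/matrixP => i j; rewrite !mxE.
have kB : b *m K = 0 by rewrite -map_Im_mul hK; apply/matrixP => i j; rewrite !mxE.
have ab_nz : (a != 0) || (b != 0).
  apply: contraR znz; rewrite negb_or !negbK => /andP[/eqP a0 /eqP b0].
  apply/eqP/matrixP => i j.
  move/matrixP/(_ i j): a0; move/matrixP/(_ i j): b0.
  by rewrite !mxE; case: (z i j) => /= ? ? -> ->.
have sym1 : forall u v : 'rV[R]_n, u *m M *m v^T = v *m M *m u^T.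
  by move=> u v; rewrite -[LHS]tr1 trmx_mul trmxK trmx_mul sM mulmxA.
have ab : b *m a^T = a *m b^T by rewrite -[LHS]tr1 trmx_mul trmxK.
have imz : Im mu = 0.
  move/matrixP/(_ 0 0): (sym1 a b).
  rewrite eA eB mulmxBl mulmxDl -!scalemxAl ab.
  set x := a *m b^T; set u := a *m a^T; set y := b *m b^T.
  have eu : a *m a^T = u by []. have ey : b *m b^T = y by [].
  clearbody x u y; rewrite !mxE => h.
  have h2 : Im mu * (u 0 0 + y 0 0) = 0.
    have -> : Im mu * (u 0 0 + y 0 0) = (Im mu * u 0 0 + Re mu * x 0 0) - (Re mu * x 0 0 - Im mu * y 0 0) by ring.
    by rewrite -h subrr.
  rewrite -eu -ey in h2.
  move/eqP: h2; rewrite mulf_eq0 => /orP[/eqP //|].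
  have : 0 < (a *m a^T) 0 0 + (b *m b^T) 0 0.
    case/orP: ab_nz => nz.
      by apply: (lt_le_trans (sqnorm_gt0 nz)); rewrite ?lerDl ?lerDr sqnorm_ge0.
    by apply: (lt_le_trans (sqnorm_gt0 nz)); rewrite ?lerDl ?lerDr sqnorm_ge0.
  by move=> /lt0r_neq0 /negPf ->.
rewrite imz !scale0r subr0 add0r in eA eB.
case/orP: ab_nz => nz.
  by exists a => //; exists (Re mu).
by exists b => //; exists (Re mu).
Qed.
End Realify.
Section Ctrb.
Variable R : realType.

Lemma ctrb_zero n m p (M : 'M[R]_n) (B : 'M[R]_(n, m)) (K : 'M[R]_(p, n)) :
  K *m ctrb M B = 0 <-> forall j : 'I_n, K *m M ^+ j *m B = 0.
Proof.
rewrite /ctrb mul_mxrow; split.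
  by move=> h j; have := mxrowK (fun j : 'I_n => K *m (M ^+ j *m B)) j;
     rewrite h submxrow0 mulmxA => <-.
move=> h; rewrite -(mxrow0 (q_ := fun _ : 'I_n => m)); apply: eq_mxrow => j.
by rewrite mulmxA h.
Qed.

Lemma eig_pow n (M : 'M[R]_n) (w : 'rV[R]_n) lam j :
  w *m M = lam *: w -> w *m M ^+ j = lam ^+ j *: w.
Proof.
move=> h; elim: j => [|j IH]; first by rewrite expr0 mulmx1 expr0 scale1r.
by rewrite exprSr mulmxA IH -scalemxAl h scalerA exprSr.
Qed.

Lemma ctrb_eig n m (M : 'M[R]_n) (B : 'M[R]_(n, m)) (w : 'rV[R]_n) lam :
  w != 0 -> w *m M = lam *: w -> w *m B = 0 -> \rank (ctrb M B) != n.
Proof.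
move=> wnz hM hB; apply: contra wnz => hr.
have h0 : w *m ctrb M B = 0.
  by apply/ctrb_zero => j; rewrite (eig_pow _ hM) -scalemxAl hB scaler0.
by rewrite -(mulmx_free_eq0 _ hr) h0.
Qed.

Lemma horner_mx_sum n (M : 'M[R]_n.+1) (q : {poly R}) :
  horner_mx M q = \sum_(i < size q) q`_i *: M ^+ i.
Proof.
rewrite -{1}(coefK q) poly_def rmorph_sum; apply: eq_bigr => i _.
by rewrite -mul_polyC rmorphM /= horner_mx_C rmorphXn /= horner_mx_X [_ * _]mul_scalar_mx.
Qed.

Lemma CH_step n m p (M : 'M[R]_n.+1) (B : 'M[R]_(n.+1, m)) (K : 'M[R]_(p, n.+1)) :
  (forall j : 'I_n.+1, K *m M ^+ j *m B = 0) -> K *m M ^+ n.+1 *m B = 0.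
Proof.
move=> h.
have CH := Cayley_Hamilton M.
rewrite horner_mx_sum size_char_poly big_ord_recr /= in CH.
have lc : (char_poly M)`_n.+1 = 1.
  by have := monicP (char_poly_monic M); rewrite lead_coefE size_char_poly.
rewrite lc scale1r in CH.
have := congr1 (fun X => K *m X *m B) CH.
rewrite mulmx0 mul0mx mulmxDr mulmxDl mulmx_sumr mulmx_suml.
rewrite big1 ?add0r // => i _.
by rewrite -scalemxAr -scalemxAl h scaler0.
Qed.

Lemma pbh n m (M : 'M[R]_n) (B : 'M[R]_(n, m)) :
  M^T = M -> \rank (ctrb M B) != n ->
  exists2 w : 'rV[R]_n, w != 0 & exists lam, w *m M = lam *: w /\ w *m B = 0.
Proof.
case: n M B => [|n] M B sM hr.
  by have := rank_leq_row (ctrb M B); rewrite leqn0 (negPf hr).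
set Cm := ctrb M B.
set V := kermx Cm.
have Vnz : V != 0 by rewrite kermx_eq0.
have VC : V *m Cm = 0 by apply: mulmx_ker.
have stab : (V *m M <= V)%MS.
  rewrite sub_kermx; apply/eqP/ctrb_zero => j.
  rewrite -(mulmxA V M) -[M *m M ^+ j]/(M * M ^+ j) -exprS.
  have [jn|jn] := ltnP j n.
    by move/ctrb_zero: VC => /(_ (@Ordinal n.+1 j.+1 jn)).
  have -> : j = n :> nat by apply/eqP; rewrite eqn_leq jn -ltnS ltn_ord.
  apply: CH_step => j'; exact: (proj1 (ctrb_zero _ _ _) VC).
pose f := real_complex R.
have stabc : (map_mx f V *m map_mx f M <= map_mx f V)%MS by rewrite -map_mxM map_submx.
have Vcnz : map_mx f V != 0 by rewrite map_mx_eq0.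
have [z znz [zV [mu hz]]] := stable_eigvec stabc Vcnz.
have zC : z *m map_mx f Cm = 0.
  by apply/eqP; rewrite -sub_kermx -map_kermx.
have [w wnz [lam [hw hC]]] := realify sM znz hz zC.
exists w => //; exists lam; split => //.
by move/ctrb_zero: hC => /(_ ord0); rewrite expr0 mulmx1.
Qed.

Lemma SSC_noeig n m (e : rel 'I_n) (v : 'I_m -> 'I_n) (N : 'M[R]_n)
    (x : 'rV[R]_n) mu :
  irreflexive e -> SSC R e v -> N^T = N ->
  (forall i j, i != j -> e i j -> 0 < N i j) ->
  (forall i j, i != j -> ~~ e i j -> N i j = 0) ->
  x *m N = mu *: x -> x *m inputB R v = 0 -> x = 0.
Proof.
move=> irr hS sN pos zer hx hB; apply/eqP; apply: contraT => xnz.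
pose T i := N i i + \sum_(j | e i j) N i j.
pose s := \sum_i `|T i| + 1.
pose N' := N - s%:M.
have offd : forall i j, i != j -> N' i j = N i j.
  by move=> i j hij; rewrite !mxE (negPf hij) mulr0n subr0.
have QN' : inQ e N'.
  split.
  - by rewrite linearB /= tr_scalar_mx sN.
  - by move=> i j hij hе; rewrite offd // pos.
  - by move=> i j hij hе; rewrite offd // zer.
  - move=> i; exists (T i - s); split.
      rewrite subr_lt0; apply: (le_lt_trans (ler_norm _)).
      have : `|T i| <= \sum_k `|T k|.
        by rewrite (bigD1 i) //= lerDl sumr_ge0.
      move=> /le_lt_trans; apply; by rewrite ltrDl ltr01.
    have -> : \sum_(j | e i j) N' i j = \sum_(j | e i j) N i j.
      apply: eq_bigr => j hj; apply: offd.
      by apply: contraTneq hj => ->; rewrite irr.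
    by rewrite /T !mxE eqxx mulr1n; ring.
have hx' : x *m N' = (mu - s) *: x.
  by rewrite mulmxBr mul_mx_scalar hx scalerBl.
by have := ctrb_eig xnz hx' hB; rewrite (hS _ QN') eqxx.
Qed.

Lemma inputB_entry n m (v : 'I_m -> 'I_n) (u : 'rV[R]_n) r :
  (u *m inputB R v) 0 r = u 0 (v r).
Proof.
rewrite mxE (bigD1 (v r)) //= !mxE eqxx mulr1 big1 ?addr0 // => i hi.
by rewrite !mxE (negPf hi) mulr0.
Qed.
End Ctrb.

Lemma split_l n1 n2 (i : 'I_n1) : split (lshift n2 i) = inl i.
Proof. exact: (unsplitK (inl i)). Qed.
Lemma split_r n1 n2 (i : 'I_n2) : split (rshift n1 i) = inr i.
Proof. exact: (unsplitK (inr i)). Qed.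
Lemma lr_neq n1 n2 (i : 'I_n1) (j : 'I_n2) : lshift n2 i != rshift n1 j.
Proof.
apply/eqP => /(congr1 val) /= h; have := ltn_ord i; rewrite h.
by rewrite ltnNge leq_addr.
Qed.

Theorem corollary2 (R : realType) (n1 n2 m1 m2 : nat)
  (e1 : rel 'I_n1) (e2 : rel 'I_n2)
  (v1 : 'I_m1 -> 'I_n1) (v2 : 'I_m2 -> 'I_n2)
  (k : 'I_n1) (l : 'I_n2) :
  simple_graph e1 -> simple_graph e2 ->
  injective v1 -> injective v2 ->
  SSC R e1 v1 -> SSC R e2 v2 ->
  SSC R (merge_rel e1 e2 k l) (merge_inputs v1 v2).
Proof.
move=> [_ irr1] [_ irr2] _ _ S1 S2 M [sM pos zer _].
apply/eqP; apply: contraT => hr.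
have [w wnz [lam [hw hB]]] := pbh sM hr.
have Ms : forall i j, M j i = M i j by move=> i j; rewrite -[in LHS]sM mxE.
set M1 := ulsubmx M; set E := ursubmx M; set F := dlsubmx M; set M2 := drsubmx M.
set x := lsubmx w; set y := rsubmx w.
have ew : w = row_mx x y by rewrite hsubmxK.
have eM : M = block_mx M1 E F M2 by rewrite submxK.
have hw' : row_mx (x *m M1 + y *m F) (x *m E + y *m M2) = row_mx (lam *: x) (lam *: y).
  by rewrite -mul_row_block -eM -ew hw {1}ew scale_row_mx.
case/eq_row_mx: hw' => h1 h2.
have hx : x *m inputB R v1 = 0.
  apply/matrixP => a r; rewrite ord1 inputB_entry mxE.
  have /matrixP/(_ 0 (lshift m2 r)) := hB.
  by rewrite inputB_entry mxE /merge_inputs split_l mxE.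
have hy : y *m inputB R v2 = 0.
  apply/matrixP => a r; rewrite ord1 inputB_entry mxE.
  have /matrixP/(_ 0 (rshift m1 r)) := hB.
  by rewrite inputB_entry mxE /merge_inputs split_r mxE.
have sM1 : M1^T = M1 by apply/matrixP => i j; rewrite !mxE Ms.
have sM2 : M2^T = M2 by apply/matrixP => i j; rewrite !mxE Ms.
have pos1 : forall i j, i != j -> e1 i j -> 0 < M1 i j.
  move=> i j hij he; rewrite !mxE; apply: pos.
    by rewrite (inj_eq (@lshift_inj _ _)).
  by rewrite /merge_rel !split_l.
have zer1 : forall i j, i != j -> ~~ e1 i j -> M1 i j = 0.
  move=> i j hij he; rewrite !mxE; apply: zer.
    by rewrite (inj_eq (@lshift_inj _ _)).
  by rewrite /merge_rel !split_l.
have pos2 : forall i j, i != j -> e2 i j -> 0 < M2 i j.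
  move=> i j hij he; rewrite !mxE; apply: pos.
    by rewrite (inj_eq (@rshift_inj _ _)).
  by rewrite /merge_rel !split_r.
have zer2 : forall i j, i != j -> ~~ e2 i j -> M2 i j = 0.
  move=> i j hij he; rewrite !mxE; apply: zer.
    by rewrite (inj_eq (@rshift_inj _ _)).
  by rewrite /merge_rel !split_r.
have Ee : forall i j, E i j = if (i == k) && (j == l) then M (lshift n2 k) (rshift n1 l) else 0.
  move=> i j; rewrite !mxE; case: ifP => [/andP[/eqP -> /eqP ->] //|hf].
  by apply: zer; rewrite ?lr_neq // /merge_rel split_l split_r hf.
have Fe : forall i j, F i j = if (j == k) && (i == l) then M (lshift n2 k) (rshift n1 l) else 0.
  move=> i j; rewrite !mxE; case: ifP => [/andP[/eqP -> /eqP ->] //|hf].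
  apply: zer; first by rewrite eq_sym lr_neq.
  by rewrite /merge_rel split_l split_r hf.
have [xk0|xknz] := eqVneq (x 0 k) 0.
  have xE : x *m E = 0.
    apply/matrixP => a b; rewrite ord1 [LHS]mxE [RHS]mxE; apply: big1 => i _.
    rewrite Ee; case: ifP => [/andP[/eqP -> _]|_]; first by rewrite xk0 mul0r.
    by rewrite mulr0.
  rewrite xE add0r in h2.
  have y0 := SSC_noeig irr2 S2 sM2 pos2 zer2 h2 hy.
  rewrite y0 mul0mx addr0 in h1.
  have x0 := SSC_noeig irr1 S1 sM1 pos1 zer1 h1 hx.
  by move: wnz; rewrite ew x0 y0 row_mx0 eqxx.
set c := M (lshift n2 k) (rshift n1 l).
have yFe : forall b, (y *m F) 0 b = y 0 l * c * (b == k)%:R.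
  move=> b; rewrite mxE (bigD1 l) //= Fe eqxx andbT big1 ?addr0.
    by case: (b == k); rewrite ?mulr1 ?mulr0.
  by move=> i hi; rewrite Fe (negPf hi) andbF mulr0.
have xDe : forall b, (x *m delta_mx k k) 0 b = x 0 k * (b == k)%:R.
  move=> b; rewrite [LHS]mxE (bigD1 k) //= [delta_mx k k k b]mxE eqxx /= big1 ?addr0 //.
  by move=> i hi; rewrite [delta_mx k k i b]mxE (negPf hi) mulr0.
pose t := y 0 l * c / x 0 k.
pose N1 := M1 + t *: delta_mx k k.
have sN1 : N1^T = N1 by rewrite /N1 linearD linearZ /= trmx_delta sM1.
have offd : forall i j, i != j -> N1 i j = M1 i j.
  move=> i j hij; rewrite !mxE.
  have -> : (i == k) && (j == k) = false.
    by apply/andP => -[/eqP ei /eqP ej]; move: hij; rewrite ei ej eqxx.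
  by rewrite mulr0 addr0.
have pos1' : forall i j, i != j -> e1 i j -> 0 < N1 i j.
  by move=> i j hij he; rewrite offd // pos1.
have zer1' : forall i j, i != j -> ~~ e1 i j -> N1 i j = 0.
  by move=> i j hij he; rewrite offd // zer1.
have hN1 : x *m N1 = lam *: x.
  rewrite mulmxDr -scalemxAr -h1; congr (_ + _).
  apply/matrixP => a b; rewrite ord1 yFe mxE xDe /t.
  by field.
have x0 := SSC_noeig irr1 S1 sN1 pos1' zer1' hN1 hx.
by move: xknz; rewrite x0 mxE eqxx.
Qed.
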